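(* For $n\ge1$ choose uniformly at random one of the $\binom{3n}{n,n,n}$ lattice paths from $(n,n,n)$ to $(0,0,0)$ with steps $(-1,0,0),(0,-1,0),(0,0,-1)$, and let $X_n$ be the integer $k$ such that the first visit of the path to the diagonal $\{x=y=z\}$ after the start is at $(k,k,k)$. Then $$\mathbb{P}(X_n=k)=\frac{a_{n-k,1}\binom{3k}{k,k,k}}{\binom{3n}{n,n,n}},\qquad0\le k\le n-1,$$ where $a_{m,1}$ is the number of such paths from $(m,m,m)$ to the origin not visiting the diagonal strictly between start and end ($a_{0,1}=0$). Moreover $n-X_n$ converges in distribution to a random variable $X$ with $\mathbb{P}(X=\ell)=a_{\ell,1}/3^{3\ell}$, $\ell\ge0$. *)

(* Defs.v *)
From HB Require Import structures.
From mathcomp Require Import all_boot all_order all_algebra.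
From mathcomp Require Import all_classical all_reals all_analysis.
Set Implicit Arguments. Unset Strict Implicit. Unset Printing Implicit Defensive.
Import Order.TTheory GRing.Theory Num.Theory.
Local Open Scope ring_scope.

(* A lattice path from (n,n,n) to (0,0,0) is encoded by its sequence of 3n
   steps; step d : 'I_3 decreases coordinate d by one.  The endpoint
   condition says that each step direction is used exactly n times. *)
Definition path_steps (n : nat) (p : {ffun 'I_(3 * n) -> 'I_3}) : seq 'I_3 :=
  [seq p i | i : 'I_(3 * n)].

Definition is_lpath (n : nat) (p : {ffun 'I_(3 * n) -> 'I_3}) : bool :=
  [forall d : 'I_3, count (pred1 d) (path_steps p) == n].

Definition lpaths (n : nat) : {set {ffun 'I_(3 * n) -> 'I_3}} :=
  [set p | is_lpath p].

(* After performing the steps s from (n,n,n), the position is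
   (n - #0-steps, n - #1-steps, n - #2-steps); it lies on the diagonal
   x = y = z iff the three step counts agree. *)
Definition st0 : 'I_3 := @Ordinal 3 0 isT.
Definition st1 : 'I_3 := @Ordinal 3 1 isT.
Definition st2 : 'I_3 := @Ordinal 3 2 isT.

Definition on_diag (s : seq 'I_3) : bool :=
  (count (pred1 st0) s == count (pred1 st1) s) &&
  (count (pred1 st1) s == count (pred1 st2) s).

Definition first_return_time (n : nat) (p : {ffun 'I_(3 * n) -> 'I_3}) : nat :=
  (find (fun i => on_diag (take i.+1 (path_steps p))) (iota 0 (3 * n))).+1.

Definition Xn (n : nat) (p : {ffun 'I_(3 * n) -> 'I_3}) : nat :=
  (n - count (pred1 st0) (take (first_return_time p) (path_steps p)))%N.

Definition avoids_diag (n : nat) (p : {ffun 'I_(3 * n) -> 'I_3}) : bool :=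
  [forall i : 'I_(3 * n), (0 < i)%N ==> ~~ on_diag (take i (path_steps p))].

Definition a1 (m : nat) : nat :=
  if m == 0%N then 0%N else #|[set p in lpaths m | avoids_diag p]|.

Definition multinom3 (k : nat) : nat := ('C(3 * k, k) * 'C(2 * k, k))%N.

Definition probX (R : realType) (n : nat) (E : pred nat) : R :=
  (#|[set p in lpaths n | E (Xn p)]|)%:R / (#|lpaths n|)%:R.

(* Main.v *)
Require Import Defs.
From HB Require Import structures.
From mathcomp Require Import all_boot all_order all_algebra.
From mathcomp Require Import all_classical all_reals all_analysis.
From mathcomp Require Import zify ring lra.
Import Order.TTheory GRing.Theory Num.Theory.
Import numFieldNormedType.Exports.

Module Aux.
Set Implicit Arguments. Unset Strict Implicit. Unset Printing Implicit Defensive.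

Definition ps m (p : {ffun 'I_m -> 'I_3}) : seq 'I_3 := [seq p i | i : 'I_m].

Fixpoint allseq (m : nat) : seq (seq 'I_3) :=
  if m is m'.+1 then
    [seq st0 :: s | s <- allseq m'] ++ [seq st1 :: s | s <- allseq m'] ++
    [seq st2 :: s | s <- allseq m']
  else [:: [::]].

Lemma I3_cases (d : 'I_3) : [\/ d = st0, d = st1 | d = st2].
Proof.
case: d => [[|[|[|k]]] Hk].
- by constructor 1; apply/val_inj.
- by constructor 2; apply/val_inj.
- by constructor 3; apply/val_inj.
- by [].
Qed.

Lemma mem_allseq m s : (s \in allseq m) = (size s == m).
Proof.
elim: m s => [|m IH] [|d s] //=.
  by rewrite !mem_cat /=; apply/negbTE; rewrite !negb_or; apply/and3P; split; apply/mapP => -[].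
rewrite !mem_cat eqSS -IH.
have E : forall d', ((d :: s) \in [seq d' :: s0 | s0 <- allseq m]) = (d == d') && (s \in allseq m).
  move=> d'; apply/mapP/andP => [[s0 Hs0 [-> ->]]|[/eqP -> Hs]]; first by [].
  by exists s.
by rewrite !E; case: (I3_cases d) => ->; rewrite eqxx ?andbT /= ?orbF //;
   case: (s \in allseq m); rewrite ?andbF ?orbF //.
Qed.

Lemma uniq_allseq m : uniq (allseq m).
Proof.
elim: m => [|m IH] //=.
have U : forall d, uniq [seq d :: s | s <- allseq m].
  by move=> d; rewrite map_inj_uniq // => x y [].
rewrite !cat_uniq !U /=.
have D : forall d d' s, d != d' -> (s \in [seq d :: s | s <- allseq m]) -> (s \in [seq d' :: s | s <- allseq m]) = false.
  move=> d d' s Hne /mapP [x _ ->]; apply/mapP => [[y _ [E _]]].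
  by move: Hne; rewrite E eqxx.
rewrite andbT; apply/andP; split; apply/hasPn => s.
- by rewrite mem_cat => /orP [] H; rewrite /= (D _ _ s _ H).
- by move=> H; rewrite /= (D _ _ s _ H).
Qed.

Lemma count_allseqS m (P : pred (seq 'I_3)) :
  count P (allseq m.+1) =
  count (fun s => P (st0 :: s)) (allseq m) + count (fun s => P (st1 :: s)) (allseq m)
  + count (fun s => P (st2 :: s)) (allseq m).
Proof. by rewrite /= !count_cat !count_map addnA. Qed.

Lemma size_allseq m : size (allseq m) = 3 ^ m.
Proof. elim: m => //= m IH; rewrite !size_cat !size_map IH expnS; lia. Qed.

Lemma psE m (p : {ffun 'I_m -> 'I_3}) : ps p = map p (enum 'I_m).
Proof. by []. Qed.

Lemma size_ps m (p : {ffun 'I_m -> 'I_3}) : size (ps p) = m.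
Proof. by rewrite psE size_map size_enum_ord. Qed.

Lemma nth_ps m (p : {ffun 'I_m -> 'I_3}) x0 (i : 'I_m) : nth x0 (ps p) i = p i.
Proof. by rewrite psE (nth_map i) ?size_enum_ord // nth_ord_enum. Qed.

Lemma ps_inj m : injective (@ps m).
Proof.
move=> p q E; apply/ffunP => i.
have := congr1 (fun s => nth st0 s i) E.
by rewrite !nth_ps.
Qed.

Lemma card_transfer m (P : pred (seq 'I_3)) :
  #|[set p : {ffun 'I_m -> 'I_3} | P (ps p)]| = count P (allseq m).
Proof.
rewrite cardE /enum_mem size_filter.
rewrite (eq_count (a2 := fun p => P (ps p))); last by move=> p; rewrite /= inE.
rewrite -(count_map (@ps m) P).
apply/permP: P; apply: uniq_perm.
- rewrite map_inj_uniq; first by rewrite -enumT enum_uniq.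
  exact: ps_inj.
- exact: uniq_allseq.
- move=> s; rewrite mem_allseq; apply/mapP/idP => [[p _ ->]|/eqP Hs].
    by rewrite size_ps.
  exists [ffun i : 'I_m => nth st0 s i]; first by rewrite -enumT mem_enum.
  apply: (@eq_from_nth _ st0); first by rewrite psE size_map size_enum_ord.
  move=> i Hi; rewrite Hs in Hi.
  by rewrite (nth_ps _ _ (Ordinal Hi)) ffunE.
Qed.

Definition cnt (d : 'I_3) (s : seq 'I_3) := count (pred1 d) s.
Definition bal (n : nat) (s : seq 'I_3) : bool := [forall d : 'I_3, count (pred1 d) s == n].

Lemma balE n s : bal n s = [&& cnt st0 s == n, cnt st1 s == n & cnt st2 s == n].
Proof.
apply/forallP/and3P => [H|[H0 H1 H2] d]; first by split; apply: H.
by case: (I3_cases d) => ->.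
Qed.

Lemma size_cnt s : size s = cnt st0 s + cnt st1 s + cnt st2 s.
Proof.
elim: s => //= d s ->; rewrite /cnt /=.
by case: (I3_cases d) => -> /=; lia.
Qed.

Lemma count_split a b (P Q : pred (seq 'I_3)) :
  count (fun s => P (take a s) && Q (drop a s)) (allseq (a + b)) =
  count P (allseq a) * count Q (allseq b).
Proof.
elim: a P => [|a IH] P.
  rewrite add0n (eq_count (a2 := fun s => P [::] && Q s)); last by move=> s; rewrite take0 drop0.
  rewrite /= addn0; case: (P [::]) => /=; first by rewrite mul1n.
  by rewrite mul0n; apply/eqP; rewrite -leqn0 leqNgt -has_count; apply/hasPn => s.
rewrite addSn !count_allseqS /= !(IH (fun s => P (_ :: s))).
by rewrite !mulnDl.
Qed.

Definition M3 m a b c := count (fun s => [&& cnt st0 s == a, cnt st1 s == b & cnt st2 s == c]) (allseq m).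

Lemma M3_fact m a b c : a + b + c = m -> M3 m a b c * (a`! * b`! * c`!) = m`!.
Proof.
elim: m a b c => [|m IH] a b c.
  move=> H; have Ha : a = 0 by lia.
  have Hb : b = 0 by lia.
  have Hc : c = 0 by lia.
  by subst.
move=> Hm.
rewrite /M3 count_allseqS /cnt /=.
have T0 : count (fun s => [&& (count (pred1 st0) s).+1 == a, count (pred1 st1) s == b
     & count (pred1 st2) s == c]) (allseq m) * (a`! * b`! * c`!) = a * m`!.
  case: a Hm => [|a] Hm.
    rewrite mul0n; apply/eqP; rewrite muln_eq0 -leqn0 leqNgt -has_count; apply/orP; left.
    by apply/hasPn => s.
  rewrite (eq_count (a2 := fun s => [&& cnt st0 s == a, cnt st1 s == b & cnt st2 s == c])) //.
  rewrite -/(M3 m a b c) -(IH a b c) ?factS; last by lia.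
  ring.
have T1 : count (fun s => [&& count (pred1 st0) s == a, (count (pred1 st1) s).+1 == b
     & count (pred1 st2) s == c]) (allseq m) * (a`! * b`! * c`!) = b * m`!.
  case: b Hm T0 => [|b] Hm T0.
    rewrite mul0n; apply/eqP; rewrite muln_eq0 -leqn0 leqNgt -has_count; apply/orP; left.
    by apply/hasPn => s; rewrite andbF.
  rewrite (eq_count (a2 := fun s => [&& cnt st0 s == a, cnt st1 s == b & cnt st2 s == c])) //.
  rewrite -/(M3 m a b c) -(IH a b c) ?factS; last by lia.
  ring.
have T2 : count (fun s => [&& count (pred1 st0) s == a, count (pred1 st1) s == b
     & (count (pred1 st2) s).+1 == c]) (allseq m) * (a`! * b`! * c`!) = c * m`!.
  case: c Hm T0 T1 => [|c] Hm T0 T1.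
    rewrite mul0n; apply/eqP; rewrite muln_eq0 -leqn0 leqNgt -has_count; apply/orP; left.
    by apply/hasPn => s; rewrite !andbF.
  rewrite (eq_count (a2 := fun s => [&& cnt st0 s == a, cnt st1 s == b & cnt st2 s == c])) //.
  rewrite -/(M3 m a b c) -(IH a b c) ?factS; last by lia.
  ring.
rewrite !mulnDl T0 T1 T2 factS -Hm; ring.
Qed.

Lemma multinom3_fact n : multinom3 n * (n`! * n`! * n`!) = (3 * n)`!.
Proof.
rewrite /multinom3.
have h1 := bin_fact (leq_addr (2 * n) n).
have h2 := bin_fact (leq_addr n n).
have E1 : (n + 2 * n = 3 * n)%N by lia.
have E2 : (n + n = 2 * n)%N by lia.
rewrite addKn E1 in h1; rewrite addKn E2 in h2.
rewrite -h1 -h2 mulnC; ring.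
Qed.

Lemma count_bal n : count (bal n) (allseq (3 * n)) = multinom3 n.
Proof.
have P : 0 < n`! * n`! * n`! by rewrite !muln_gt0 fact_gt0.
apply/eqP; rewrite -(eqn_pmul2r P) multinom3_fact -(@M3_fact (3 * n) n n n); last by lia.
by rewrite /M3; apply/eqP; congr (_ * _); apply: eq_count => s; rewrite balE.
Qed.

Lemma multinom3_gt0 n : 0 < multinom3 n.
Proof. by rewrite /multinom3 muln_gt0 !bin_gt0; apply/andP; split; lia. Qed.

Lemma multinom3_le n : multinom3 n <= 27 ^ n.
Proof.
rewrite -count_bal; apply: leq_trans (count_size _ _) _.
by rewrite size_allseq expnM.
Qed.

Lemma multinom3S n : multinom3 n.+1 * (n.+1 ^ 3) = multinom3 n * ((3*n+1)*(3*n+2)*(3*n+3)).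
Proof.
have P : 0 < n`! * n`! * n`! by rewrite !muln_gt0 fact_gt0.
apply/eqP; rewrite -(eqn_pmul2r P).
have -> : multinom3 n * ((3 * n + 1) * (3 * n + 2) * (3 * n + 3)) * (n`! * n`! * n`!) =
  (multinom3 n * (n`! * n`! * n`!)) * ((3 * n + 1) * (3 * n + 2) * (3 * n + 3)) by ring.
rewrite multinom3_fact.
have -> : multinom3 n.+1 * n.+1 ^ 3 * (n`! * n`! * n`!) = multinom3 n.+1 * (n.+1`! * n.+1`! * n.+1`!).
  by rewrite !factS; ring.
rewrite multinom3_fact.
have -> : (3 * n.+1 = (3 * n).+3)%N by lia.
rewrite !factS; apply/eqP; ring.
Qed.

Definition frt n (s : seq 'I_3) := (find (fun i => on_diag (take i.+1 s)) (iota 0 (3 * n))).+1.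
Definition cs n (s : seq 'I_3) := count (pred1 st0) (take (frt n s) s).
Definition Xs n (s : seq 'I_3) := (n - cs n s)%N.
Definition avoid (s : seq 'I_3) : bool :=
  all (fun i => (0 < i) ==> ~~ on_diag (take i s)) (iota 0 (size s)).

Lemma XnE n (p : {ffun 'I_(3 * n) -> 'I_3}) : Xn p = Xs n (path_steps p).
Proof. by []. Qed.

Lemma on_diagE s : on_diag s = (cnt st0 s == cnt st1 s) && (cnt st1 s == cnt st2 s).
Proof. by []. Qed.

Lemma bal_diag l s : bal l s -> on_diag s.
Proof. by rewrite balE on_diagE => /and3P [/eqP -> /eqP -> /eqP ->]; rewrite !eqxx. Qed.

Lemma cs_char n s l : 0 < n -> size s = 3 * n -> bal n s ->
  (cs n s == l) = [&& 0 < l, l <= n, bal l (take (3 * l) s) & avoid (take (3 * l) s)].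
Proof.
move=> n0 Hs Hb.
set P := fun i => on_diag (take i.+1 s).
have Hhas : has P (iota 0 (3 * n)).
  apply/hasP; exists (3 * n).-1; first by rewrite mem_iota; lia.
  rewrite /P prednK; last by lia.
  by rewrite -Hs take_size; apply: bal_diag Hb.
have Hj : find P (iota 0 (3 * n)) < 3 * n by rewrite has_find size_iota in Hhas.
have Pj : P (find P (iota 0 (3 * n))).
  by have := nth_find 0 Hhas; rewrite nth_iota.
have Bj : forall i, i < find P (iota 0 (3 * n)) -> ~~ P i.
  move=> i Hi; have := before_find 0 Hi; rewrite nth_iota ?add0n => [->//|]; lia.
rewrite /cs /frt -/P.
move: Hj Pj Bj; set j := find P (iota 0 (3 * n)) => Hj Pj Bj.
have Hsz : size (take j.+1 s) = j.+1 by rewrite size_takel // Hs.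
move: (Pj); rewrite /P on_diagE => /andP [/eqP E01 /eqP E12].
have Hsz2 := size_cnt (take j.+1 s).
rewrite Hsz -E12 -E01 in Hsz2.
apply/eqP/and4P => [Hl|[l0 ln Hbl Hav]].
- have Hjl : j.+1 = 3 * l by rewrite Hsz2 -Hl /cnt; lia.
  split; [lia|lia| |].
  + by rewrite -Hjl balE -E12 -E01 -Hl !eqxx.
  + apply/allP => i; rewrite mem_iota size_takel; last by rewrite Hs; lia.
    move=> /andP [_ Hi]; apply/implyP => i0.
    rewrite take_takel; last by lia.
    case: i i0 Hi => [//|i] _ Hi.
    apply: Bj; lia.
- have Hj3 : j.+1 = 3 * l.
    case: (ltngtP j.+1 (3 * l)) => // H.
    + move/allP: Hav => /(_ j.+1).
      rewrite mem_iota size_takel; last by rewrite Hs; lia.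
      have Hin : (0 <= j.+1 < 0 + 3 * l) by apply/andP; split; lia.
      move=> /(_ Hin) /=.
      rewrite take_takel; last by lia.
      by move=> /negP /(_ Pj).
    + have H' : (3 * l).-1 < j by rewrite -subn1; lia.
      have := Bj _ H'.
      rewrite /P prednK; last by lia.
      by rewrite (bal_diag Hbl).
  rewrite Hj3; move: Hbl; rewrite balE => /and3P [/eqP H0 _ _]; exact: H0.
Qed.

Lemma bal_split n l s : l <= n -> size s = 3 * n ->
  bal n s && (bal l (take (3 * l) s) && avoid (take (3 * l) s)) =
  (bal l (take (3 * l) s) && avoid (take (3 * l) s)) && bal (n - l) (drop (3 * l) s).
Proof.
move=> ln Hs.
have C : forall d, cnt d s = cnt d (take (3 * l) s) + cnt d (drop (3 * l) s).
  by move=> d; rewrite /cnt -count_cat cat_take_drop.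
rewrite !balE !C.
case: (cnt st0 (take (3 * l) s) =P l) => [->|] /=; last by rewrite !andbF.
case: (cnt st1 (take (3 * l) s) =P l) => [->|] /=; last by rewrite !andbF.
case: (cnt st2 (take (3 * l) s) =P l) => [->|] /=; last by rewrite !andbF.
case: (avoid _); rewrite ?andbF //=.
have E : forall x, (l + x == n) = (x == n - l) by move=> x; apply/eqP/eqP; lia.
by rewrite !E andbT.
Qed.

Definition A1 l := count (fun s => bal l s && avoid s) (allseq (3 * l)).

Lemma count_cs n l : 0 < n ->
  count (fun s => bal n s && (cs n s == l)) (allseq (3 * n)) =
  if (0 < l) && (l <= n) then A1 l * multinom3 (n - l) else 0.
Proof.
move=> n0.
case: ifP => [/andP [l0 ln]|H].
- rewrite (@eq_in_count _ _ (fun s => (bal l (take (3 * l) s) && avoid (take (3 * l) s))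
            && bal (n - l) (drop (3 * l) s))); last first.
    move=> s; rewrite mem_allseq => /eqP Hs.
    case Hb: (bal n s); last by rewrite /= -(bal_split ln Hs) Hb.
    by rewrite /= (cs_char _ n0 Hs Hb) l0 ln /= -(bal_split ln Hs) Hb.
  have -> : (3 * n = 3 * l + 3 * (n - l))%N by lia.
  rewrite -count_bal.
  exact: (count_split (3 * l) (3 * (n - l)) (fun s => bal l s && avoid s) (bal (n - l))).
- apply/eqP; rewrite -leqn0 leqNgt -has_count; apply/hasPn => s.
  rewrite mem_allseq => /eqP Hs; apply/negP => /andP [Hb].
  by rewrite (cs_char _ n0 Hs Hb) => /and4P [l0 ln _ _]; rewrite l0 ln in H.
Qed.

Lemma cs_le n s : bal n s -> cs n s <= n.
Proof.
rewrite balE => /and3P [/eqP H _ _].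
have := count_cat (pred1 st0) (take (frt n s) s) (drop (frt n s) s).
rewrite cat_take_drop; move: H; rewrite /cnt /cs; lia.
Qed.

Lemma avoidE m (p : {ffun 'I_(3 * m) -> 'I_3}) : avoids_diag p = avoid (path_steps p).
Proof.
rewrite /avoids_diag /avoid.
have -> : size (path_steps p) = 3 * m by exact: size_ps.
apply/forallP/allP => [H i|H i].
- rewrite mem_iota add0n => /andP [_ Hi]; exact: (H (Ordinal Hi)).
- by apply: H; rewrite mem_iota add0n ltn_ord.
Qed.

Lemma a1E l : 0 < l -> a1 l = A1 l.
Proof.
move=> l0; rewrite /a1; case: eqP => [E|_]; first by rewrite E in l0.
rewrite /A1 -card_transfer; apply: eq_card => p.
by rewrite !inE avoidE.
Qed.

Lemma a10 : a1 0 = 0. Proof. by []. Qed.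

Lemma card_lpaths n : #|lpaths n| = multinom3 n.
Proof.
rewrite -count_bal -card_transfer; apply: eq_card => p.
by rewrite !inE.
Qed.

Lemma card_event n (E : pred nat) :
  #|[set p in lpaths n | E (Xn p)]| = count (fun s => bal n s && E (Xs n s)) (allseq (3 * n)).
Proof.
rewrite -card_transfer; apply: eq_card => p.
by rewrite !inE.
Qed.

Lemma count_part (T : Type) (P : pred T) (g : T -> nat) K s :
  (forall x, P x -> g x < K) ->
  count P s = \sum_(l < K) count (fun x => P x && (g x == l)) s.
Proof.
move=> H; elim: s => [|x s IH] /=; first by rewrite big1.
rewrite big_split /= -IH; congr (_ + _).
case Px: (P x) => /=; last by rewrite big1.
have Hg := H x Px.
rewrite (bigD1 (Ordinal Hg)) //= eqxx big1 ?addn0 // => i /eqP Hi.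
case: eqP => // E; exfalso; apply: Hi; apply: val_inj => /=; by rewrite E.
Qed.

Lemma renewal_nat n : 0 < n -> multinom3 n = \sum_(l < n.+1) a1 l * multinom3 (n - l).
Proof.
move=> n0.
rewrite -{1}count_bal (@count_part _ _ (cs n) n.+1); last by move=> s /cs_le.
apply: eq_bigr => l _; rewrite count_cs //.
case: ifP => [/andP [l0 ln]|H]; first by rewrite a1E.
have -> : nat_of_ord l = 0 by move: H (ltn_ord l); case: (nat_of_ord l) => //= k; lia.
by rewrite a10.
Qed.

Lemma multinom3_0 : multinom3 0 = 1. Proof. by []. Qed.
Lemma multinom3_1 : multinom3 1 = 6. Proof. by []. Qed.

Lemma M_lb n : 6 * 27 ^ n <= n.+1 * multinom3 n.+1.
Proof.
elim: n => [|n IH]; first by rewrite multinom3_1.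
have key : 27 * n.+1 * multinom3 n.+1 <= n.+2 * multinom3 n.+2.
  have P : 0 < n.+2 ^ 3 by rewrite expn_gt0.
  rewrite -(leq_pmul2l P).
  have -> : n.+2 ^ 3 * (n.+2 * multinom3 n.+2) = n.+2 * (multinom3 n.+2 * n.+2 ^ 3) by ring.
  rewrite multinom3S.
  have -> : n.+2 * (multinom3 n.+1 * ((3 * n.+1 + 1) * (3 * n.+1 + 2) * (3 * n.+1 + 3))) =
     multinom3 n.+1 * (n.+2 * ((3 * n.+1 + 1) * (3 * n.+1 + 2) * (3 * n.+1 + 3))) by ring.
  have -> : n.+2 ^ 3 * (27 * n.+1 * multinom3 n.+1) = multinom3 n.+1 * (n.+2 ^ 3 * (27 * n.+1)) by ring.
  rewrite leq_mul2l; apply/orP; right.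
  rewrite !expnS expn0; nia.
rewrite expnS mulnCA; apply: leq_trans key; rewrite -mulnA leq_mul2l; by apply/orP; right.
Qed.

Section Real.
Variable R : realType.
Local Open Scope ring_scope.

Definition u n : R := (multinom3 n)%:R / 27%:R ^+ n.
Definition f l : R := (a1 l)%:R / 27%:R ^+ l.
Definition S N : R := \sum_(n < N) u n.

Lemma p27 n : 0 < 27%:R ^+ n :> R.
Proof. by rewrite exprn_gt0 // ltr0n. Qed.

Lemma u0 : u 0 = 1.
Proof. by rewrite /u multinom3_0 expr0 divr1. Qed.

Lemma u_ge0 n : 0 <= u n.
Proof. by rewrite /u divr_ge0 // ltW // p27. Qed.

Lemma f_ge0 n : 0 <= f n.
Proof. by rewrite /f divr_ge0 // ltW // p27. Qed.

Lemma f0 : f 0 = 0.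
Proof. by rewrite /f a10 mul0r. Qed.

Lemma u_le1 n : u n <= 1.
Proof.
rewrite /u ler_pdivrMr ?p27 // mul1r -natrX ler_nat; exact: multinom3_le.
Qed.

Lemma u_lb k : 2%:R / 9%:R * k.+1%:R^-1 <= u k.+1.
Proof.
rewrite /u ler_pdivlMr ?p27 //.
have Hk : (0 : R) < k.+1%:R by rewrite ltr0n.
rewrite mulrAC ler_pdivrMr //.
have := M_lb k; rewrite -(ler_nat R) !natrM natrX => H.
have E : 2%:R / 9%:R * 27%:R ^+ k.+1 = 6%:R * 27%:R ^+ k :> R.
  by rewrite exprS; field.
by rewrite E; apply: le_trans H _; rewrite mulrC.
Qed.

Lemma renewal n : (0 < n)%N -> u n = \sum_(l < n.+1) f l * u (n - l).
Proof.
move=> n0; rewrite /u {1}(renewal_nat n0) natr_sum mulr_suml.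
apply: eq_bigr => l _.
have Hl : (l <= n)%N by rewrite -ltnS.
have -> : 27%:R ^+ n = 27%:R ^+ l * 27%:R ^+ (n - l) :> R by rewrite -exprD subnKC.
rewrite natrM /f invfM; field.
by apply/andP; split; rewrite expf_neq0 // pnatr_eq0.
Qed.

Lemma S_mono a b : (a <= b)%N -> S a <= S b.
Proof.
move=> ab; rewrite /S -(subnKC ab) big_split_ord /= lerDl.
by apply: sumr_ge0 => i _; apply: u_ge0.
Qed.

Lemma S0 : S 0 = 0. Proof. by rewrite /S big_ord0. Qed.
Lemma SS N : S N.+1 = S N + u N. Proof. by rewrite /S big_ord_recr. Qed.

Lemma S_id N : (0 < N)%N -> S N = 1 + \sum_(l < N) f l * S (N - l).
Proof.
pose T N := \sum_(n < N) \sum_(l < n.+1) f l * u (n - l).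
have C1 : forall N, T N = \sum_(l < N) f l * S (N - l).
  elim=> [|M IH]; first by rewrite /T !big_ord0.
  rewrite /T big_ord_recr /= -/(T M) IH.
  rewrite [RHS](eq_bigr (fun l : 'I_M.+1 => f l * S (M - l) + f l * u (M - l))); last first.
    by move=> l _; rewrite subSn ?SS ?mulrDr // -ltnS.
  by rewrite big_split /= [X in _ = X + _]big_ord_recr /= subnn S0 mulr0 addr0.
case: N => [//|N] _.
rewrite -C1 /T /S big_ord_recl [in RHS]big_ord_recl /= u0 big_ord1.
rewrite (_ : f ord0 = 0); last exact: f0.
rewrite mul0r add0r; congr (_ + _); apply: eq_bigr => i _.
by rewrite renewal // /bump leq0n.
Qed.

End Real.

Local Open Scope classical_set_scope.

Section Real2.
Variable R : realType.
Local Open Scope ring_scope.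
Local Notation u := (@u R).
Local Notation f := (@f R).
Local Notation S := (@S R).

Lemma sum_ge_prefix (G : nat -> R) a b : (forall i, 0 <= G i) -> (a <= b)%N ->
  \sum_(i < a) G i <= \sum_(i < b) G i.
Proof.
move=> G0 ab; rewrite -(subnKC ab) big_split_ord /= lerDl.
by apply: sumr_ge0 => i _.
Qed.

Lemma S_unb (B : R) : exists N, B < S N.
Proof.
have Hd : series (@harmonic R) @ \oo --> +oo.
  apply: nondecreasing_dvgn_lt; last exact: dvg_harmonic.
  by apply: nondecreasing_series => n _ _; apply: harmonic_ge0.
move/cvgryPge: Hd => /(_ (9%:R / 2%:R * B + 1)) [N0 _ H].
have := H N0 (leqnn _); rewrite seriesEord /= => HN.
exists N0.+1.
have : 2%:R / 9%:R * \sum_(k < N0) k.+1%:R^-1 <= S N0.+1.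
  rewrite /S big_ord_recl mulr_sumr.
  apply: (@le_trans _ _ (\sum_(i < N0) u (bump 0 i))).
    by apply: ler_sum => i _; rewrite /bump leq0n add1n; apply: u_lb.
  rewrite -[X in X <= _]add0r; apply: lerD; [exact: u_ge0 | exact: lexx].
move: HN; set H9 := \sum_(k < N0) _ => HN HS.
have : 2%:R / 9%:R * (9%:R / 2%:R * B + 1) <= 2%:R / 9%:R * H9.
  by rewrite ler_pM2l // divr_gt0 // ltr0n.
rewrite mulrDr mulrA (_ : 2%:R / 9%:R * (9%:R / 2%:R) = 1 :> R); last by field.
rewrite mul1r mulr1 => HB.
apply: lt_le_trans HS; apply: lt_le_trans HB.
by rewrite ltrDl divr_gt0 // ltr0n.
Qed.

Lemma S_ge0 N : 0 <= S N.
Proof. by apply: sumr_ge0 => i _; apply: u_ge0. Qed.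

Lemma F_le1 m : \sum_(l < m) f l <= 1.
Proof.
rewrite leNgt; apply/negP => Hgt.
set F := \sum_(l < m) f l in Hgt.
have d0 : 0 < F - 1 by rewrite subr_gt0.
have [N' HN'] := S_unb (m%:R / (F - 1)).
have m0 : (0 < m)%N.
  rewrite lt0n; apply/eqP => m0; move: Hgt; rewrite /F.
  by move: (m) m0 => m1 ->; rewrite big_ord0 ltr10.
have Hpos : (0 < N' + m)%N by lia.
have Hid := @S_id R _ Hpos.
have L1 : 1 + F * S N' <= S (N' + m).
  rewrite Hid lerD2l.
  apply: (le_trans _ (@sum_ge_prefix (fun l => f l * S (N' + m - l)) m _ _ _)); last first.
  - by rewrite leq_addl.
  - by move=> i; rewrite mulr_ge0 ?f_ge0 ?S_ge0.
    rewrite /F mulr_suml; apply: ler_sum => l _.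
    rewrite ler_wpM2l ?f_ge0 //; apply: S_mono; move: (ltn_ord l); lia.
have L2 : S (N' + m) <= S N' + m%:R.
  rewrite /S big_split_ord /= lerD2l.
  apply: (@le_trans _ _ (\sum_(i < m) (1:R))); first by apply: ler_sum => i _; apply: u_le1.
  by rewrite sumr_const card_ord.
have : (F - 1) * S N' <= m%:R - 1.
  have := le_trans L1 L2; lra.
rewrite ltr_pdivrMr // mulrC in HN'.
move=> H'.
have := lt_le_trans HN' H'; lra.
Qed.

Lemma F_lb N : (0 < N)%N -> S N - 1 <= (\sum_(l < N) f l) * S N.
Proof.
move=> N0; rewrite {1}(@S_id R _ N0) addrAC subrr add0r mulr_suml.
apply: ler_sum => l _; rewrite ler_wpM2l ?f_ge0 //; apply: S_mono; exact: leq_subr.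
Qed.

Lemma part2 : series (fun l : nat => (a1 l)%:R / 27%:R ^+ l : R) @ \oo --> (1 : R).
Proof.
rewrite seriesEord; apply/cvgrPdist_lt => e e0.
have [N0 HN0] := S_unb e^-1.
exists N0 => // N /= HN.
have SN : e^-1 < S N by apply: (lt_le_trans HN0); apply: S_mono.
have SN0 : 0 < S N by apply: (lt_trans _ SN); rewrite invr_gt0.
have N0' : (0 < N)%N by case: N SN0 {HN SN} => //; rewrite S0 ltxx.
have Fle := F_le1 N.
have Flb := @F_lb N N0'.
rewrite ger0_norm; last by rewrite subr_ge0.
have : (1 - \sum_(l < N) f l) * S N <= 1 by lra.
have : 1 < e * S N.
  by rewrite -ltr_pdivrMl // mulr1.
move: Fle Flb; set F := \sum_(l < N) f l => _ _ H1 H2.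
rewrite -(ltr_pM2r SN0); exact: (le_lt_trans H2).
Qed.

End Real2.

Local Open Scope classical_set_scope.

Section Real3.
Variable R : realType.
Local Open Scope ring_scope.

Lemma div_le_nat a q b c : (0 < q)%N -> (0 < c)%N ->
  (a%:R / q%:R <= b%:R / c%:R :> R) = (a * c <= b * q)%N.
Proof.
move=> q0 c0.
by rewrite ler_pdivrMr ?ltr0n // mulrAC ler_pdivlMr ?ltr0n // -!natrM ler_nat.
Qed.

Lemma r_eq m : (multinom3 m)%:R / (multinom3 m.+1)%:R =
   ((m.+1)^3)%:R / ((3 * m + 1) * (3 * m + 2) * (3 * m + 3))%:R :> R.
Proof.
apply/eqP; rewrite eqr_div ?pnatr_eq0 -?lt0n ?multinom3_gt0 //; last by rewrite !muln_gt0; lia.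
by rewrite -!natrM -multinom3S mulnC eqxx.
Qed.

Lemma r_cvg : (fun m => (multinom3 m)%:R / (multinom3 m.+1)%:R : R) @ \oo --> (27%:R^-1 : R).
Proof.
apply: (@squeeze_cvgr _ _ _ _ (fun _ => 27%:R^-1) (fun m => 27%:R^-1 + harmonic m)).
- exists 0%N => // m _ /=; rewrite r_eq; apply/andP; split.
  + rewrite (_ : 27%:R^-1 = 1%:R / 27%:R :> R); last by rewrite div1r.
    by rewrite div_le_nat //; [nia | rewrite !muln_gt0; lia].
  + have -> : 27%:R^-1 + m.+1%:R^-1 = ((m + 28)%N)%:R / ((27 * m.+1)%N)%:R :> R.
      rewrite natrM natrD; field; by rewrite addrC -mulrSr pnatr_eq0.
    rewrite div_le_nat; [nia | rewrite !muln_gt0; lia | by []].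
- exact: cvg_cst.
- rewrite -[X in _ --> X]addr0; apply: cvgD; [exact: cvg_cst | exact: cvg_harmonic].
Qed.


Lemma M_neq0 n : (multinom3 n)%:R != 0 :> R.
Proof. by rewrite pnatr_eq0 -lt0n multinom3_gt0. Qed.

Lemma rho l : (fun m => (multinom3 m)%:R / (multinom3 (m + l))%:R : R) @ \oo --> ((27%:R ^+ l)^-1 : R).
Proof.
elim: l => [|l IH].
  rewrite expr0 invr1.
  under eq_cvg do rewrite addn0 divff ?M_neq0 //.
  exact: cvg_cst.
have E : forall m, (multinom3 m)%:R / (multinom3 (m + l.+1))%:R =
   ((multinom3 m)%:R / (multinom3 (m + l))%:R) *
   ((multinom3 (m + l))%:R / (multinom3 (m + l).+1)%:R) :> R.
  move=> m; rewrite addnS; field.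
  by rewrite !M_neq0.
under eq_cvg do rewrite E.
rewrite exprS invfM mulrC.
apply: cvgM => //.
have := r_cvg; rewrite -(cvg_shiftn l) /=.
by [].
Qed.

End Real3.

Local Open Scope classical_set_scope.

Section Real4.
Variable R : realType.
Local Open Scope ring_scope.

Lemma probX_count n E : probX R n E =
  (count (fun s => bal n s && E (Xs n s)) (allseq (3 * n)))%:R / (multinom3 n)%:R.
Proof. by rewrite /probX card_event card_lpaths. Qed.

Lemma probX_ext n (E E' : pred nat) : (forall x, (x <= n)%N -> E x = E' x) ->
  probX R n E = probX R n E'.
Proof.
move=> H; rewrite !probX_count; congr (_%:R / _); apply: eq_count => s.
by rewrite H // /Xs leq_subr.
Qed.

Lemma prob_eq n l : (0 < n)%N -> (l <= n)%N ->
  probX R n (fun X => (n - X)%N == l) = (a1 l)%:R * (multinom3 (n - l))%:R / (multinom3 n)%:R.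
Proof.
move=> n0 ln; rewrite probX_count -natrM; congr (_%:R / _).
rewrite (eq_count (a2 := fun s => bal n s && (cs n s == l))); last first.
  by move=> s; case Hb: (bal n s) => //=; rewrite /Xs subKn ?cs_le.
rewrite count_cs //; case: ifP => [/andP [l0 _]|H]; first by rewrite a1E.
have -> : l = 0%N by move: H; rewrite ln andbT; case: (l).
by rewrite a10.
Qed.

Lemma prob_le n l : probX R n (fun X => (n - X <= l)%N) =
  \sum_(j < l.+1) probX R n (fun X => (n - X)%N == j).
Proof.
rewrite probX_count (@count_part _ _ (fun s => n - Xs n s)%N l.+1); last first.
  by move=> s /andP [_ H]; rewrite ltnS.
rewrite natr_sum mulr_suml; apply: eq_bigr => j _; rewrite probX_count.
congr (_%:R / _); apply: eq_count => s.
case: eqP => [->|]; last by rewrite !andbF.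
by rewrite -ltnS ltn_ord !andbT.
Qed.

Lemma sum_cvg K (g : nat -> nat -> R) (L : nat -> R) :
  (forall j, (j < K)%N -> g j @ \oo --> L j) ->
  (fun n => \sum_(j < K) g j n) @ \oo --> \sum_(j < K) L j.
Proof.
elim: K => [|K IH] H.
  rewrite big_ord0; under eq_cvg do rewrite big_ord0.
  exact: cvg_cst.
under eq_cvg do rewrite big_ord_recr.
rewrite big_ord_recr; apply: cvgD => /=.
  by apply: IH => j jK; apply: H; rewrite ltnS ltnW.
exact: H.
Qed.

Lemma part1 n k : (1 <= n)%N -> (k <= n - 1)%N ->
  probX R n (fun X => X == k) = (a1 (n - k))%:R * (multinom3 k)%:R / (multinom3 n)%:R.
Proof.
move=> n1 kn.
rewrite (@probX_ext _ _ (fun X => (n - X)%N == (n - k)%N)); last first.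
  by move=> x xn; apply/eqP/eqP; lia.
rewrite prob_eq //; last by lia.
by rewrite subKn //; lia.
Qed.

Lemma part3 l : (fun n : nat => probX R n (fun X => (n - X)%N == l)) @ \oo -->
          ((a1 l)%:R / 27%:R ^+ l : R).
Proof.
rewrite -(cvg_shiftn l.+1) /=.
have E : forall m, probX R (m + l.+1) (fun X => (m + l.+1 - X)%N == l) =
   (a1 l)%:R * ((multinom3 (m + 1))%:R / (multinom3 (m + 1 + l))%:R).
  move=> m; rewrite prob_eq; [|lia|lia].
  have -> : (m + l.+1 - l = m + 1)%N by lia.
  have -> : (m + l.+1 = m + 1 + l)%N by lia.
  by rewrite mulrA.
under eq_cvg do rewrite E.
apply: cvgM; first exact: cvg_cst.
by have := @rho R l; rewrite -(cvg_shiftn 1) /=.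
Qed.

End Real4.

End Aux.
Import Aux.

Local Open Scope classical_set_scope.
Local Open Scope ring_scope.

Theorem proposition3p5 (R : realType) :
  (forall n k : nat, (1 <= n)%N -> (k <= n - 1)%N ->
     probX R n (fun X => X == k) =
       (a1 (n - k))%:R * (multinom3 k)%:R / (multinom3 n)%:R)
  /\ (series (fun l : nat => (a1 l)%:R / 27%:R ^+ l : R) @ \oo --> (1 : R))
  /\ (forall l : nat,
        (fun n : nat => probX R n (fun X => (n - X)%N == l)) @ \oo -->
          ((a1 l)%:R / 27%:R ^+ l : R))
  /\ (forall l : nat,
        (fun n : nat => probX R n (fun X => (n - X <= l)%N)) @ \oo -->
          (\sum_(j < l.+1) (a1 j)%:R / 27%:R ^+ j : R)).
Proof.
split; first by move=> n k; exact: part1.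
split; first exact: part2.
split; first by move=> l; exact: part3.
move=> l.
have -> : (fun n : nat => probX R n (fun X => (n - X <= l)%N)) =
  (fun n => \sum_(j < l.+1) probX R n (fun X => (n - X)%N == j)).
  by apply: funext => n; exact: prob_le.
apply: (sum_cvg (g := fun j n => probX R n (fun X => (n - X)%N == j))
                (L := fun j => (a1 j)%:R / 27%:R ^+ j)) => j _.
exact: part3.
Qed.
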